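(* Consider the averaged buck converter $-L\dot I=V-uV_s$, $C\dot V=I-GV$ with scalar constants $L>0$, $C>0$, $G\ge0$, and a known constant $V_s\neq0$. Assume there exist constants $V^\star>0$, $\bar u\in(0,1)$, $\bar I$ with $0=V^\star-\bar uV_s$ and $0=\bar I-GV^\star$. Consider the dynamic controller $$\dot u=-\frac1{k_d}\big(k_i(u-\bar u)+V_s\dot I\big),$$ with $k_d>0$, $k_i>0$. Then the solution $(I,V,u)$ of the closed-loop system asymptotically converges to $(\bar I,V^\star,\bar u)$.
   Context: $I$ is the inductor current, $V$ the capacitor voltage, $u$ the duty cycle (treated as a state of the closed loop); $I,V,\dot I$ are assumed measured. *)

(* Defs.v *)
From Stdlib Require Import Reals.
From Coquelicot Require Import Coquelicot.

(* Main.v *)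
Require Import Defs.
From Stdlib Require Import Reals Lra Psatz.
From Coquelicot Require Import Coquelicot.
Open Scope R_scope.

Definition Fv (L C kd ki a eta eps p q r : R) :=
  L*p^2/2 + C*q^2/2 + (kd*r + a*p)^2/(2*ki) - eta*a*L*kd*C*q*r - eps*L*C*p*q.

Definition dFv (L C G kd ki a eta eps p q r : R) :=
  let dp := (a*r - q)/L in let dq := (p - G*q)/C in
  let dr := -(1/kd)*(ki*r + a*dp) in
  L*p*dp + C*q*dq + (kd*r+a*p)*(kd*dr + a*dp)/ki
  - eta*a*L*kd*C*(dq*r + q*dr) - eps*L*C*(dp*q + p*dq).

Lemma young (al be c x y : R) : 0 < al -> 0 <= be -> c^2 <= 4*al*be ->
  c*x*y <= al*x^2 + be*y^2.
Proof.
  intros Ha Hb Hc.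
  assert (H : 0 <= al*(al*x^2 + be*y^2 - c*x*y)).
  { replace (al*(al*x^2 + be*y^2 - c*x*y)) with
      ((al*x - c*y/2)^2 + (al*be - c^2/4)*y^2) by field.
    assert (0 <= (al*be - c^2/4)*y^2) by (apply Rmult_le_pos; [lra| apply pow2_ge_0]).
    pose proof (pow2_ge_0 (al*x - c*y/2)); lra. }
  assert (0 <= al*x^2 + be*y^2 - c*x*y).
  { destruct (Rle_or_lt 0 (al*x^2 + be*y^2 - c*x*y)); auto; nra. }
  lra.
Qed.

Lemma dFv_eq L C G kd ki a eta eps p q r : 0 < L -> 0 < C -> 0 < kd -> 0 < ki ->
  dFv L C G kd ki a eta eps p q r =
  - G*q^2 - kd*r^2
  + eta*(-(a^2)*C*q^2 - a*L*kd*p*r + a*(L*kd*G + C*L*ki + C*a^2)*q*r)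
  + eps*(-L*p^2 + C*q^2 - a*C*q*r + L*G*p*q).
Proof. intros. unfold dFv. field. lra. Qed.

Lemma div_nn (x y : R) : 0 <= x -> 0 < y -> 0 <= x / y.
Proof. intros. unfold Rdiv. apply Rmult_le_pos; auto. left; apply Rinv_0_lt_compat; auto. Qed.

Lemma lyap L C G kd ki a : 0 < L -> 0 < C -> 0 <= G -> 0 < kd -> 0 < ki -> a <> 0 ->
  exists eta eps k, 0 < k /\ forall p q r,
   (L*p^2/4 + C*q^2/4 + (kd*r+a*p)^2/(4*ki) <= Fv L C kd ki a eta eps p q r) /\
   dFv L C G kd ki a eta eps p q r <= - k * Fv L C kd ki a eta eps p q r.
Proof.
  intros HL HC HG Hkd Hki Ha.
  assert (HA : 0 < a^2) by (pose proof (Rsqr_pos_lt a Ha); unfold Rsqr in *; lra).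
  set (A := a^2) in *. assert (HAe : A = a^2) by reflexivity. clearbody A.
  set (K := L*kd*G + C*L*ki + C*A). assert (HKe : K = L*kd*G + C*L*ki + C*A) by reflexivity. clearbody K.
  assert (HK : 0 < K).
  { rewrite HKe. assert (0 <= L*kd*G) by (apply Rmult_le_pos; nra).
    assert (0 < C*L*ki) by (repeat apply Rmult_lt_0_compat; lra).
    assert (0 < C*A) by (repeat apply Rmult_lt_0_compat; lra). lra. }
  set (D := 64*L*kd + (64*L^2*kd*G^2+1)/C + 8*K^2/(C*kd) + 512*A^2*L^2*kd*C + 1
            + 4*(A^2*L*C + A*L^2*C*ki)).
  assert (Hpos : forall X, 0 <= X -> 0 <= X) by auto.
  assert (h1 : 0 <= 64*L*kd) by nra.
  assert (h2 : 0 <= (64*L^2*kd*G^2+1)/C).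
  { apply div_nn; [|lra]. assert (0 <= L^2*kd*G^2).
    { apply Rmult_le_pos; [apply Rmult_le_pos|]; [apply pow2_ge_0|lra|apply pow2_ge_0]. } lra. }
  assert (h3 : 0 <= 8*K^2/(C*kd)).
  { apply div_nn; [|nra]. pose proof (pow2_ge_0 K); lra. }
  assert (h4 : 0 <= 512*A^2*L^2*kd*C).
  { pose proof (pow2_ge_0 A); pose proof (pow2_ge_0 L).
    repeat apply Rmult_le_pos; lra. }
  assert (h6 : 0 <= 4*(A^2*L*C + A*L^2*C*ki)).
  { pose proof (pow2_ge_0 A); pose proof (pow2_ge_0 L).
    assert (0 <= A^2*L*C) by (repeat apply Rmult_le_pos; lra).
    assert (0 <= A*L^2*C*ki) by (repeat apply Rmult_le_pos; lra). lra. }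
  assert (HD : 0 < D) by (unfold D; lra).
  set (eta := 1/D).
  assert (Heta : 0 < eta) by (unfold eta; apply Rdiv_lt_0_compat; lra).
  assert (HetaD : eta * D = 1) by (unfold eta; field; lra). clearbody eta.
  assert (hX : forall X, 0 <= X -> X <= D -> eta * X <= 1).
  { intros X HX0 HX. nra. }
  assert (b1 : 64*eta*L*kd <= 1).
  { replace (64*eta*L*kd) with (eta*(64*L*kd)) by ring. apply hX; unfold D; lra. }
  assert (b2 : eta*(64*L^2*kd*G^2) <= C).
  { assert (eta*((64*L^2*kd*G^2+1)/C) <= 1) by (apply hX; unfold D; lra).
    assert (eta*(64*L^2*kd*G^2+1) <= C).
    { apply (Rmult_le_reg_r (/C)). apply Rinv_0_lt_compat; lra.
      rewrite Rinv_r by lra. unfold Rdiv in H. lra. }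
    lra. }
  assert (b3 : eta*(8*K^2) <= C*kd).
  { assert (eta*(8*K^2/(C*kd)) <= 1) by (apply hX; unfold D; lra).
    apply (Rmult_le_reg_r (/(C*kd))). apply Rinv_0_lt_compat; nra.
    rewrite Rinv_r by nra. unfold Rdiv in H. lra. }
  assert (b4 : eta*(512*A^2*L^2*kd*C) <= 1) by (apply hX; unfold D; lra).
  assert (b5 : eta <= 1).
  { replace eta with (eta*1) by ring. apply hX; unfold D; lra. }
  assert (b6 : eta*(4*(A^2*L*C + A*L^2*C*ki)) <= 1) by (apply hX; unfold D; lra).
  set (eps := 8*eta^2*A*L*kd).
  assert (Hepse : eps = 8*eta^2*A*L*kd) by reflexivity. clearbody eps.
  assert (Heta2 : 0 < eta^2) by (apply pow_lt; lra).
  assert (Heps : 0 < eps).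
  { rewrite Hepse. apply Rmult_lt_0_compat; [|lra]. apply Rmult_lt_0_compat; [|lra].
    apply Rmult_lt_0_compat; lra. }
  assert (be1 : eps*C <= eta*A*C/8).
  { rewrite Hepse. assert (0 <= eta*A*C) by (apply Rmult_le_pos; [apply Rmult_le_pos|]; lra).
    replace (8*eta^2*A*L*kd*C) with ((64*eta*L*kd)*(eta*A*C)/8) by field. nra. }
  assert (be1' : eps <= eta*A/8).
  { rewrite Hepse. assert (0 <= eta*A) by (apply Rmult_le_pos; lra).
    replace (8*eta^2*A*L*kd) with ((64*eta*L*kd)*(eta*A)/8) by field. nra. }
  assert (T1 : forall p r, (-(eta*a*L*kd))*p*r <= (eps*L/4)*p^2 + (kd/8)*r^2).
  { intros; apply young; [|lra|].
    { assert (0 < eps*L) by (apply Rmult_lt_0_compat; lra). lra. }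
    right. rewrite Hepse, HAe. field. }
  assert (T2 : forall q r, (eta*a*K)*q*r <= (eta*A*C/4)*q^2 + (kd/8)*r^2).
  { intros; apply young; try lra.
    { apply Rmult_lt_0_compat; [apply Rmult_lt_0_compat|]; lra. }
    replace ((eta*a*K)^2) with ((eta*A/8)*(eta*(8*K^2))) by (rewrite HAe; field).
    replace (4*(eta*A*C/4)*(kd/8)) with ((eta*A/8)*(C*kd)) by field.
    apply Rmult_le_compat_l; [|lra]. apply Rmult_le_pos; lra. }
  assert (X3 : eta^3*(512*A^2*L^2*kd*C) <= 1).
  { replace (eta^3*(512*A^2*L^2*kd*C)) with (eta^2*(eta*(512*A^2*L^2*kd*C))) by ring.
    assert (eta^2 <= 1) by nra.
    assert (0 <= eta*(512*A^2*L^2*kd*C)) by nra. nra. }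
  assert (T3 : forall q r, (-(eps*a*C))*q*r <= (eta*A*C/4)*q^2 + (kd/8)*r^2).
  { intros; apply young; try lra.
    { apply Rmult_lt_0_compat; [apply Rmult_lt_0_compat|]; lra. }
    replace ((-(eps*a*C))^2) with ((eta*A*C*kd/8)*(eta^3*(512*A^2*L^2*kd*C)))
      by (rewrite Hepse, HAe; field).
    replace (4*(eta*A*C/4)*(kd/8)) with ((eta*A*C*kd/8)*1) by field.
    apply Rmult_le_compat_l; [|lra].
    assert (0 < eta*A*C*kd) by (repeat apply Rmult_lt_0_compat; lra). lra. }
  assert (T4 : forall p q, (eps*L*G)*p*q <= (eps*L/4)*p^2 + (eta*A*C/8)*q^2).
  { intros; apply young; try lra.
    { assert (0 < eps*L) by (apply Rmult_lt_0_compat; lra). lra. }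
    { assert (0 < eta*A*C) by (repeat apply Rmult_lt_0_compat; lra). lra. }
    replace ((eps*L*G)^2) with ((eps*L/8)*(eta*A)*(eta*(64*L^2*kd*G^2)))
      by (rewrite Hepse; field).
    replace (4*(eps*L/4)*(eta*A*C/8)) with ((eps*L/8)*(eta*A)*C) by field.
    apply Rmult_le_compat_l; [|lra].
    assert (0 < eps*L*(eta*A)) by (repeat apply Rmult_lt_0_compat; lra). lra. }
  set (bk1 := 2*eps*L*ki/(3*(L*ki + 2*A))).
  set (bk2 := eta*A/3).
  set (bk3 := 5*ki/(12*kd)).
  assert (Hb1 : 0 < bk1).
  { unfold bk1. apply Rdiv_lt_0_compat; [|nra].
    repeat apply Rmult_lt_0_compat; lra. }
  assert (Hb2 : 0 < bk2) by (unfold bk2; nra).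
  assert (Hb3 : 0 < bk3) by (unfold bk3; apply Rdiv_lt_0_compat; lra).
  exists eta, eps, (Rmin (Rmin bk1 bk2) bk3).
  set (k := Rmin (Rmin bk1 bk2) bk3).
  assert (Hk1 : k <= bk1) by (unfold k; eapply Rle_trans; [apply Rmin_l|apply Rmin_l]).
  assert (Hk2 : k <= bk2) by (unfold k; eapply Rle_trans; [apply Rmin_l|apply Rmin_r]).
  assert (Hk3 : k <= bk3) by (unfold k; apply Rmin_r).
  assert (Hk : 0 < k) by (unfold k; repeat apply Rmin_glb_lt; lra).
  clearbody k. split; [exact Hk|].
  intros p q r.
  set (z := kd*r + a*p).
  assert (Hbeta : eta^2*(A^2*L*C^2) + ki*eta^2*A*L^2*C^2 <= C/4).
  { replace (eta^2*(A^2*L*C^2) + ki*eta^2*A*L^2*C^2) with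
      ((C/4)*(eta*(eta*(4*(A^2*L*C + A*L^2*C*ki))))) by field.
    assert (0 <= eta*(4*(A^2*L*C + A*L^2*C*ki))) by nra.
    assert (eta*(eta*(4*(A^2*L*C + A*L^2*C*ki))) <= 1) by nra.
    assert (0 < C/4) by lra. nra. }
  assert (Hc1 : ((eta*A - eps)*L*C)^2 <= 4*(L/4)*(eta^2*(A^2*L*C^2))).
  { replace (4*(L/4)*(eta^2*(A^2*L*C^2))) with ((eta*A)^2*(L*C)^2) by field.
    replace (((eta*A - eps)*L*C)^2) with ((eta*A - eps)^2*(L*C)^2) by ring.
    apply Rmult_le_compat_r; [apply pow2_ge_0|].
    assert (0 <= eps) by lra. assert (0 <= eta*A - eps) by lra. nra. }
  assert (Y1 : ((eta*A - eps)*L*C)*p*q <= (L/4)*p^2 + (eta^2*(A^2*L*C^2))*q^2).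
  { apply young; [lra| |exact Hc1]. pose proof (pow2_ge_0 eta). 
    assert (0 <= A^2*L*C^2) by (pose proof (pow2_ge_0 A); pose proof (pow2_ge_0 C); 
      apply Rmult_le_pos; [apply Rmult_le_pos|]; lra). nra. }
  assert (Y1' : (-((eta*A - eps)*L*C))*p*q <= (L/4)*p^2 + (eta^2*(A^2*L*C^2))*q^2).
  { apply young; [lra| |]. pose proof (pow2_ge_0 eta). 
    assert (0 <= A^2*L*C^2) by (pose proof (pow2_ge_0 A); pose proof (pow2_ge_0 C); 
      apply Rmult_le_pos; [apply Rmult_le_pos|]; lra). nra.
    replace ((-((eta*A - eps)*L*C))^2) with (((eta*A - eps)*L*C)^2) by ring. exact Hc1. }
  assert (Hb2p : 0 <= ki*eta^2*A*L^2*C^2).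
  { pose proof (pow2_ge_0 eta); pose proof (pow2_ge_0 L); pose proof (pow2_ge_0 C).
    repeat apply Rmult_le_pos; lra. }
  assert (Y2 : (-(eta*a*L*C))*z*q <= (1/(4*ki))*z^2 + (ki*eta^2*A*L^2*C^2)*q^2).
  { apply young; [apply Rdiv_lt_0_compat; lra|exact Hb2p|].
    right. rewrite HAe. field. lra. }
  assert (Y2' : (eta*a*L*C)*z*q <= (1/(4*ki))*z^2 + (ki*eta^2*A*L^2*C^2)*q^2).
  { apply young; [apply Rdiv_lt_0_compat; lra|exact Hb2p|].
    right. rewrite HAe. field. lra. }
  assert (HFe : Fv L C kd ki a eta eps p q r =
     L*p^2/2 + C*q^2/2 + z^2/(2*ki) + ((eta*A - eps)*L*C)*p*q - (eta*a*L*C)*z*q).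
  { unfold Fv, z. rewrite HAe. field. lra. }
  assert (Hq2 : 0 <= q^2) by apply pow2_ge_0.
  assert (HqB : (eta^2*(A^2*L*C^2))*q^2 + (ki*eta^2*A*L^2*C^2)*q^2 <= C/4*q^2).
  { rewrite <- Rmult_plus_distr_r. apply Rmult_le_compat_r; lra. }
  assert (Hz2 : z^2/(4*ki) = (1/(4*ki))*z^2) by (field; lra).
  assert (Hz2' : z^2/(2*ki) = 2*((1/(4*ki))*z^2)) by (field; lra).
  split.
  { rewrite HFe. rewrite Hz2, Hz2'. lra. }
  assert (Hp2 : 0 <= p^2) by apply pow2_ge_0.
  assert (Hr2 : 0 <= r^2) by apply pow2_ge_0.
  assert (HdF : dFv L C G kd ki a eta eps p q r <=
     -(eps*L/2)*p^2 - (G + eta*A*C/4)*q^2 - (5*kd/8)*r^2).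
  { rewrite dFv_eq by lra. replace (a^2) with A by exact HAe.
    rewrite <- HKe.
    pose proof (T1 p r). pose proof (T2 q r). pose proof (T3 q r). pose proof (T4 p q).
    assert (eps*C*q^2 <= eta*A*C/8*q^2) by (apply Rmult_le_compat_r; lra).
    lra. }
  set (c1 := 3*(L*ki+2*A)/(4*ki)).
  set (c2 := 3*C/4).
  set (c3 := 3*kd^2/(2*ki)).
  assert (Hzb : z^2 <= 2*kd^2*r^2 + 2*A*p^2).
  { unfold z. rewrite HAe. pose proof (pow2_ge_0 (kd*r - a*p)). nra. }
  assert (HU : Fv L C kd ki a eta eps p q r <= c1*p^2 + c2*q^2 + c3*r^2).
  { rewrite HFe.
    assert (3*((1/(4*ki))*z^2) <= 3*((1/(4*ki))*(2*kd^2*r^2 + 2*A*p^2))).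
    { apply Rmult_le_compat_l; [lra|]. apply Rmult_le_compat_l; [|lra].
      left; apply Rdiv_lt_0_compat; lra. }
    assert (E : c1*p^2 + c2*q^2 + c3*r^2 =
      3*L/4*p^2 + 3*C/4*q^2 + 3*((1/(4*ki))*(2*kd^2*r^2 + 2*A*p^2))).
    { unfold c1, c2, c3. field. lra. }
    rewrite E. rewrite Hz2'. lra. }
  assert (K1 : k*c1 <= eps*L/2).
  { apply Rle_trans with (bk1*c1).
    { apply Rmult_le_compat_r; [|lra]. unfold c1. left.
      apply Rdiv_lt_0_compat; [|lra]. nra. }
    unfold bk1, c1. right. field. split; [lra|]. nra. }
  assert (K2 : k*c2 <= eta*A*C/4).
  { apply Rle_trans with (bk2*c2).
    { apply Rmult_le_compat_r; [unfold c2; lra|lra]. }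
    unfold bk2, c2. right. field. }
  assert (K3 : k*c3 <= 5*kd/8).
  { apply Rle_trans with (bk3*c3).
    { apply Rmult_le_compat_r; [|lra]. unfold c3. left.
      apply Rdiv_lt_0_compat; [|lra]. nra. }
    unfold bk3, c3. right. field. lra. }
  assert (k * Fv L C kd ki a eta eps p q r <= k*(c1*p^2 + c2*q^2 + c3*r^2))
    by (apply Rmult_le_compat_l; lra).
  assert (k*c1*p^2 <= eps*L/2*p^2) by (apply Rmult_le_compat_r; lra).
  assert (k*c2*q^2 <= eta*A*C/4*q^2) by (apply Rmult_le_compat_r; lra).
  assert (k*c3*r^2 <= 5*kd/8*r^2) by (apply Rmult_le_compat_r; lra).
  assert (0 <= G*q^2) by (apply Rmult_le_pos; lra).
  lra.
Qed.

Lemma conv_lemma (f : R -> R) (l c k : R) : 0 < k ->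
  (forall t, 0 <= t -> (f t - l)^2 * (1 + k*t) <= c) -> is_lim f p_infty l.
Proof.
  intros Hk H. apply is_lim_spec. intros eps. simpl.
  destruct eps as [e He]; simpl.
  exists (Rmax 0 (c/(k*e^2))). intros t Ht.
  assert (H0 : 0 < t) by (eapply Rle_lt_trans; [apply Rmax_l|exact Ht]).
  assert (H1 : c/(k*e^2) < t) by (eapply Rle_lt_trans; [apply Rmax_r|exact Ht]).
  assert (He2 : 0 < k*e^2) by (apply Rmult_lt_0_compat; [lra|apply pow_lt; lra]).
  assert (H2 : c < k*e^2*t).
  { apply (Rmult_lt_compat_l (k*e^2)) in H1; auto.
    replace (k*e^2*(c/(k*e^2))) with c in H1 by (field; lra). lra. }
  specialize (H t (Rlt_le _ _ H0)).
  destruct (Rlt_or_le (Rabs (f t - l)) e) as [Hl|Hl]; auto.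
  exfalso.
  assert (e^2 <= (f t - l)^2).
  { rewrite <- (pow2_abs (f t - l)). apply pow_incr. lra. }
  assert (0 <= k*t) by nra.
  nra.
Qed.

Lemma deriv_F (L C kd ki a eta eps c1 c2 c3 : R) (f1 f2 f3 : R -> R) t d1 d2 d3 :
  0 < ki ->
  is_derive f1 t d1 -> is_derive f2 t d2 -> is_derive f3 t d3 ->
  is_derive (fun s => Fv L C kd ki a eta eps (f1 s - c1) (f2 s - c2) (f3 s - c3)) t
   (let p := f1 t - c1 in let q := f2 t - c2 in let r := f3 t - c3 in
    L*p*d1 + C*q*d2 + (kd*r+a*p)*(kd*d3 + a*d1)/ki
    - eta*a*L*kd*C*(d2*r + q*d3) - eps*L*C*(d1*q + p*d2)).
Proof.
  intros Hki H1 H2 H3. unfold Fv.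
  auto_derive.
  - repeat split; eexists; eauto.
  - replace (Derive (fun x => f1 x) t) with d1 by (symmetry; apply is_derive_unique; auto).
    replace (Derive (fun x => f2 x) t) with d2 by (symmetry; apply is_derive_unique; auto).
    replace (Derive (fun x => f3 x) t) with d3 by (symmetry; apply is_derive_unique; auto).
    simpl. field. lra.
Qed.

Lemma bound_from (X F h0 w m : R) : 0 < m -> 0 < w -> m*X <= F -> F*w <= h0 -> X*w <= h0/m.
Proof.
  intros Hm Hw H1 H2. apply (Rmult_le_reg_l m); auto.
  replace (m*(h0/m)) with h0 by (field; lra).
  assert (m*X*w <= F*w) by (apply Rmult_le_compat_r; lra). nra.
Qed.

Theorem corollary2
  (L C G Vs Vstar ubar Ibar kd ki : R)
  (HL : 0 < L) (HC : 0 < C) (HG : 0 <= G) (HVs : Vs <> 0)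
  (HVstar : 0 < Vstar) (Hubar : 0 < ubar < 1)
  (Heq1 : 0 = Vstar - ubar * Vs) (Heq2 : 0 = Ibar - G * Vstar)
  (Hkd : 0 < kd) (Hki : 0 < ki)
  (I V u : R -> R)
  (Hsol : forall t : R, 0 <= t ->
     exists dI dV : R,
       is_derive I t dI /\ is_derive V t dV /\
       - L * dI = V t - u t * Vs /\
       C * dV = I t - G * V t /\
       is_derive u t (- (1 / kd) * (ki * (u t - ubar) + Vs * dI))) :
  is_lim I p_infty (Finite Ibar) /\
  is_lim V p_infty (Finite Vstar) /\
  is_lim u p_infty (Finite ubar).
Proof.
  destruct (lyap L C G kd ki Vs HL HC HG Hkd Hki HVs) as (eta & eps & k & Hk & HF).
  set (F := fun s => Fv L C kd ki Vs eta eps (I s - Ibar) (V s - Vstar) (u s - ubar)).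
  assert (Hder : forall t, 0 <= t -> exists dF, is_derive F t dF /\ dF <= -k * F t).
  { intros t Ht. destruct (Hsol t Ht) as (dI & dV & HI & HV & E1 & E2 & Hu).
    eexists. split. { unfold F. apply deriv_F; eauto. }
    assert (EI : dI = (Vs*(u t - ubar) - (V t - Vstar))/L).
    { apply (Rmult_eq_reg_l L); [|lra]. field_simplify; [|lra]. lra. }
    assert (EV : dV = ((I t - Ibar) - G*(V t - Vstar))/C).
    { apply (Rmult_eq_reg_l C); [|lra]. field_simplify; [|lra]. lra. }
    apply Rle_trans with (dFv L C G kd ki Vs eta eps (I t - Ibar) (V t - Vstar) (u t - ubar)).
    { right. unfold dFv. cbv zeta. rewrite EV, EI. field. lra. }
    apply HF. }
  set (h := fun s => F s * (1 + k*s)).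
  assert (HFnn : forall t, 0 <= F t).
  { intros t. destruct (HF (I t - Ibar) (V t - Vstar) (u t - ubar)) as [Hlo _].
    unfold F. eapply Rle_trans; [|exact Hlo].
    pose proof (pow2_ge_0 (I t - Ibar)); pose proof (pow2_ge_0 (V t - Vstar));
    pose proof (pow2_ge_0 (kd*(u t - ubar) + Vs*(I t - Ibar))).
    assert (0 <= (kd*(u t - ubar) + Vs*(I t - Ibar))^2/(4*ki))
      by (apply div_nn; lra).
    nra. }
  assert (Hh : forall t, 0 <= t -> ex_derive h t /\ Derive h t <= 0).
  { intros t Ht. destruct (Hder t Ht) as (dF & HdF & HdFle).
    assert (Hd : is_derive h t (dF*(1+k*t) + F t * k)).
    { unfold h. auto_derive. { eexists; eauto. }
      replace (Derive (fun x => F x) t) with dF by (symmetry; apply is_derive_unique; auto).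
      ring. }
    split. { eexists; eauto. }
    rewrite (is_derive_unique _ _ _ Hd).
    assert (Hkt : 0 <= k*t) by (apply Rmult_le_pos; lra).
    assert (dF*(1+k*t) <= -k*F t*(1+k*t)) by (apply Rmult_le_compat_r; lra).
    pose proof (HFnn t). assert (0 <= F t * (k*t) * k) by (apply Rmult_le_pos; [apply Rmult_le_pos|]; lra). nra. }
  assert (Hmono : forall t, 0 <= t -> h t <= h 0).
  { intros t Ht. destruct (Req_dec t 0) as [->|Hne]; [lra|].
    destruct (MVT_gen h 0 t (Derive h)) as (c & Hc & Heq).
    { intros x Hx. rewrite Rmin_left in Hx by lra. rewrite Rmax_right in Hx by lra.
      apply Derive_correct. apply Hh. lra. }
    { intros x Hx. rewrite Rmin_left in Hx by lra. rewrite Rmax_right in Hx by lra.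
      apply continuity_pt_filterlim. exact (@ex_derive_continuous R_AbsRing R_NormedModule h x (proj1 (Hh x ltac:(lra)))). }
    rewrite Rmin_left in Hc by lra. rewrite Rmax_right in Hc by lra.
    assert (Derive h c <= 0) by (apply Hh; lra).
    assert (0 <= - Derive h c * (t - 0)) by (apply Rmult_le_pos; lra). 
    lra. }
  assert (Hb : forall t, 0 <= t ->
    (L/4)*(I t - Ibar)^2 <= F t /\ (C/4)*(V t - Vstar)^2 <= F t /\ (1/(4*ki))*(kd*(u t - ubar) + Vs*(I t - Ibar))^2 <= F t /\ F t * (1 + k*t) <= h 0 /\ 0 < 1 + k*t).
  { intros t Ht. destruct (HF (I t - Ibar) (V t - Vstar) (u t - ubar)) as [Hlo _].
    fold (F t) in Hlo.
    pose proof (pow2_ge_0 (I t - Ibar)); pose proof (pow2_ge_0 (V t - Vstar));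
    pose proof (pow2_ge_0 (kd*(u t - ubar) + Vs*(I t - Ibar))).
    assert (E : (kd*(u t - ubar) + Vs*(I t - Ibar))^2/(4*ki) =
       (1/(4*ki))*(kd*(u t - ubar) + Vs*(I t - Ibar))^2) by (field; lra).
    assert (0 <= (1/(4*ki))*(kd*(u t - ubar) + Vs*(I t - Ibar))^2).
    { apply Rmult_le_pos; [left; apply Rdiv_lt_0_compat|]; lra. }
    assert (Hkt : 0 <= k*t) by (apply Rmult_le_pos; lra).
    assert (E1 : L*(I t - Ibar)^2/4 = L/4*(I t - Ibar)^2) by field.
    assert (E2 : C*(V t - Vstar)^2/4 = C/4*(V t - Vstar)^2) by field.
    rewrite E1, E2, E in Hlo.
    pose proof (Hmono t Ht) as Hm. unfold h in Hm.
    assert (0 <= L/4*(I t - Ibar)^2) by (apply Rmult_le_pos; lra).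
    assert (0 <= C/4*(V t - Vstar)^2) by (apply Rmult_le_pos; lra).
    unfold h; unfold F in *; repeat split; try lra. }
  split; [|split].
  - apply (conv_lemma I Ibar (h 0 / (L/4)) k Hk). intros t Ht.
    destruct (Hb t Ht) as (B1 & B2 & B3 & B4 & B5).
    apply (bound_from _ (F t)); lra.
  - apply (conv_lemma V Vstar (h 0 / (C/4)) k Hk). intros t Ht.
    destruct (Hb t Ht) as (B1 & B2 & B3 & B4 & B5).
    apply (bound_from _ (F t)); lra.
  - apply (conv_lemma u ubar ((2*(h 0/(1/(4*ki))) + 2*Vs^2*(h 0/(L/4)))/kd^2) k Hk).
    intros t Ht.
    destruct (Hb t Ht) as (B1 & B2 & B3 & B4 & B5).
    assert (Z1 : (kd*(u t - ubar) + Vs*(I t - Ibar))^2 * (1+k*t) <= h 0/(1/(4*ki))).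
    { apply (bound_from _ (F t)); try lra. apply Rdiv_lt_0_compat; lra. }
    assert (Z2 : (I t - Ibar)^2 * (1+k*t) <= h 0/(L/4)).
    { apply (bound_from _ (F t)); lra. }
    assert (Hkd2 : 0 < kd^2) by (apply pow_lt; lra).
    assert (Hsq : kd^2*(u t - ubar)^2 <= 2*(kd*(u t - ubar) + Vs*(I t - Ibar))^2
                  + 2*Vs^2*(I t - Ibar)^2).
    { pose proof (pow2_ge_0 (kd*(u t - ubar) + 2*Vs*(I t - Ibar))). nra. }
    apply (Rmult_le_reg_l (kd^2)); auto.
    replace (kd^2 * ((2*(h 0/(1/(4*ki))) + 2*Vs^2*(h 0/(L/4)))/kd^2))
      with (2*(h 0/(1/(4*ki))) + 2*Vs^2*(h 0/(L/4))) by (field; lra).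
    assert (kd^2*(u t - ubar)^2*(1+k*t) <= (2*(kd*(u t - ubar) + Vs*(I t - Ibar))^2
                  + 2*Vs^2*(I t - Ibar)^2)*(1+k*t)) by (apply Rmult_le_compat_r; lra).
    assert (Vs^2*((I t - Ibar)^2 * (1+k*t)) <= Vs^2*(h 0/(L/4)))
      by (apply Rmult_le_compat_l; [apply pow2_ge_0|lra]).
    nra.
Qed.
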